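(* Let $A$ be a valuation domain which is not a field, $E$ a non-zero divisible $A$-module and $R=A\propto E$ the trivial ring extension of $A$ by $E$. Then: (1) if $E$ is uniserial, $R$ is a chain ring; (2) if $E$ is torsionfree but not uniserial, $R$ is an fqp-ring which is not arithmetical; (3) if $E$ is neither torsionfree nor uniserial, $R$ is Gaussian but not an fqp-ring.
   Context: The trivial ring extension $R=A\propto E$ is the ring with underlying group $A\times E$ and multiplication $(a,e)(a',e')=(aa',ae'+a'e)$. A module is uniserial if its submodules are totally ordered; a chain ring is a ring uniserial over itself. A ring is arithmetical if its lattice of ideals is distributive. $R$ is Gaussian if $c(fg)=c(f)c(g)$ for all $f,g\in R[X]$, where $c(f)$ is the ideal generated by the coefficients of $f$. A module $V$ is quasi-projective if $\mathrm{Hom}(V,V)\to\mathrm{Hom}(V,V/X)$ is surjective for every submodule $X$ of $V$; a ring is an fqp-ring if every finitely generated ideal is quasi-projective. *)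

(* Defs.v *)
From HB Require Import structures.
From mathcomp Require Import all_boot all_order all_algebra.
Set Implicit Arguments. Unset Strict Implicit. Unset Printing Implicit Defensive.
Import GRing.Theory.
Local Open Scope ring_scope.

Definition is_submodule (R : pzRingType) (V : lmodType R) (S : V -> Prop) :=
  [/\ S 0,
      (forall x y, S x -> S y -> S (x + y)) &
      (forall (r : R) x, S x -> S (r *: x))].

Definition subsetP {T : Type} (S1 S2 : T -> Prop) := forall x, S1 x -> S2 x.

Definition uniserial (R : pzRingType) (V : lmodType R) :=
  forall S1 S2 : V -> Prop, is_submodule S1 -> is_submodule S2 ->
    subsetP S1 S2 \/ subsetP S2 S1.

Definition torsionfree (A : idomainType) (E : lmodType A) :=
  forall (a : A) (e : E), a *: e = 0 -> a = 0 \/ e = 0.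

Definition divisible (A : idomainType) (E : lmodType A) :=
  forall (a : A) (e : E), a != 0 -> exists e' : E, e = a *: e'.

Definition is_ideal (R : comPzRingType) (I : R -> Prop) :=
  @is_submodule R R^o I.

Definition chain_ring (R : comPzRingType) := uniserial (R^o : lmodType R).

Definition valuation_domain (A : idomainType) := chain_ring A.

Definition is_field_ring (A : idomainType) :=
  forall a : A, a != 0 -> a \is a GRing.unit.

Definition ideal_gen (R : comPzRingType) (S : R -> Prop) : R -> Prop :=
  fun x => forall I : R -> Prop, is_ideal I -> subsetP S I -> I x.

Definition ideal_add (R : comPzRingType) (I J : R -> Prop) : R -> Prop :=
  fun x => exists i j, [/\ I i, J j & x = i + j].

Definition ideal_cap (R : comPzRingType) (I J : R -> Prop) : R -> Prop :=
  fun x => I x /\ J x.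

Definition ideal_mul (R : comPzRingType) (I J : R -> Prop) : R -> Prop :=
  fun x => exists (n : nat) (a b : 'I_n -> R),
    (forall k, I (a k) /\ J (b k)) /\ x = \sum_(k < n) a k * b k.

Definition ideal_eq (R : comPzRingType) (I J : R -> Prop) :=
  forall x, I x <-> J x.

Definition arithmetical (R : comPzRingType) :=
  forall I J K : R -> Prop, is_ideal I -> is_ideal J -> is_ideal K ->
    ideal_eq (ideal_cap I (ideal_add J K))
             (ideal_add (ideal_cap I J) (ideal_cap I K)).

Definition content (R : comNzRingType) (f : {poly R}) : R -> Prop :=
  ideal_gen (fun x => x \in (f : seq R)).

Definition gaussian (R : comNzRingType) :=
  forall f g : {poly R}, ideal_eq (content (f * g)) (ideal_mul (content f) (content g)).

(* A (finitely generated) ideal I, viewed as an R-module, is quasi-projective: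
   for every submodule X of I (i.e. ideal X contained in I) every R-linear map
   g : I -> I/X lifts to an R-linear map f : I -> I with (f mod X) = g.
   An R-linear map I -> I/X is encoded by a (set-theoretic) lift h : R -> R
   sending I into I and R-linear modulo X on I. *)
Definition quasi_projective_ideal (R : comPzRingType) (I : R -> Prop) :=
  forall X : R -> Prop, is_ideal X -> subsetP X I ->
  forall h : R -> R,
    (forall v, I v -> I (h v)) ->
    (forall v w, I v -> I w -> X (h (v + w) - h v - h w)) ->
    (forall (r v : R), I v -> X (h (r * v) - r * h v)) ->
  exists f : R -> R,
    [/\ (forall v, I v -> I (f v)),
        (forall v w, I v -> I w -> f (v + w) = f v + f w),
        (forall (r v : R), I v -> f (r * v) = r * f v) &
        (forall v, I v -> X (f v - h v))].

Definition fqp_ring (R : comPzRingType) :=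
  forall s : seq R, quasi_projective_ideal (ideal_gen (fun x => x \in s)).

Definition triv_ext (A : comNzRingType) (E : lmodType A) : Type := (A * E)%type.

HB.instance Definition _ (A : comNzRingType) (E : lmodType A) :=
  GRing.Zmodule.on (triv_ext E).

Definition te_one (A : comNzRingType) (E : lmodType A) : triv_ext E := (1, 0).
Definition te_mul (A : comNzRingType) (E : lmodType A) (x y : triv_ext E)
  : triv_ext E := (x.1 * y.1, x.1 *: y.2 + y.1 *: x.2).

Lemma te_mulA (A : comNzRingType) (E : lmodType A) : associative (@te_mul A E).
Proof.
move=> [a e] [b f] [c g]; rewrite /te_mul /=; congr pair; first by rewrite mulrA.
rewrite !scalerDr !scalerA -!addrA (mulrC c a) (mulrC c b).
congr (_ + _); exact: addrC.
Qed.

Lemma te_mulC (A : comNzRingType) (E : lmodType A) : commutative (@te_mul A E).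
Proof. by move=> [a e] [b f]; rewrite /te_mul /= mulrC addrC. Qed.

Lemma te_mul1 (A : comNzRingType) (E : lmodType A) :
  left_id (@te_one A E) (@te_mul A E).
Proof. by move=> [a e]; rewrite /te_mul /= mul1r scale1r scaler0 addr0. Qed.

Lemma te_mulDl (A : comNzRingType) (E : lmodType A) :
  left_distributive (@te_mul A E) +%R.
Proof.
move=> [a e] [b f] [c g]; rewrite /te_mul /=.
congr pair; first by rewrite mulrDl.
by rewrite scalerDl scalerDr addrACA.
Qed.

Lemma te_one_neq0 (A : comNzRingType) (E : lmodType A) : @te_one A E != 0.
Proof. by apply/negP => /eqP [] /eqP; rewrite oner_eq0. Qed.

HB.instance Definition _ (A : comNzRingType) (E : lmodType A) :=
  GRing.Zmodule_isComNzRing.Build (triv_ext E)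
    (@te_mulA A E) (@te_mulC A E) (@te_mul1 A E) (@te_mulDl A E) (@te_one_neq0 A E).

Notation "A \propto E" := (@triv_ext A E) (at level 40, only parsing).

(* Main.v *)
Require Import Defs.
From HB Require Import structures.
From mathcomp Require Import all_boot all_order all_algebra.
From mathcomp Require Import zify ring.
From Stdlib Require Import Classical ClassicalEpsilon FunctionalExtensionality PropExtensionality.
Set Implicit Arguments. Unset Strict Implicit. Unset Printing Implicit Defensive.
Import GRing.Theory.
Local Open Scope ring_scope.

Section Gen.
Variable R : comPzRingType.
Implicit Types (I J : R -> Prop) (x y r : R).

Lemma idealP I : is_ideal I <->
  [/\ I 0, (forall x y, I x -> I y -> I (x + y)) & (forall r x, I x -> I (r * x))].
Proof. by []. Qed.

Lemma id0 I : is_ideal I -> I 0. Proof. by case. Qed.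
Lemma idD I x y : is_ideal I -> I x -> I y -> I (x + y). Proof. by case=> _ h _; apply: h. Qed.
Lemma idM I r x : is_ideal I -> I x -> I (r * x). Proof. by case=> _ _ h; apply: h. Qed.
Lemma idMr I r x : is_ideal I -> I x -> I (x * r). Proof. by move=> H Hx; rewrite mulrC; apply: idM. Qed.
Lemma idN I x : is_ideal I -> I x -> I (- x).
Proof. by move=> H Hx; rewrite -mulN1r; apply: idM. Qed.
Lemma idB I x y : is_ideal I -> I x -> I y -> I (x - y).
Proof. by move=> H Hx Hy; apply: idD => //; apply: idN. Qed.
Lemma id_sum I n (F : 'I_n -> R) : is_ideal I -> (forall i, I (F i)) -> I (\sum_i F i).
Proof.
move=> H HF; elim/big_ind: _ => //; first exact: id0.
by move=> a b; apply: idD.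
Qed.

Lemma gen_ideal (S : R -> Prop) : is_ideal (ideal_gen S).
Proof.
apply/idealP; split.
- by move=> I HI _; apply: id0.
- by move=> x y Hx Hy I HI HS; apply: idD => //; [apply: Hx | apply: Hy].
- by move=> r x Hx I HI HS; apply: idM => //; apply: Hx.
Qed.
Lemma gen_sub (S : R -> Prop) x : S x -> ideal_gen S x.
Proof. by move=> Hx I HI HS; apply: HS. Qed.
Lemma gen_min (S : R -> Prop) I : is_ideal I -> Defs.subsetP S I -> Defs.subsetP (ideal_gen S) I.
Proof. by move=> HI HS x Hx; apply: Hx. Qed.

Definition pid x : R -> Prop := fun y => exists r, y = r * x.
Lemma pid_ideal x : is_ideal (pid x).
Proof.
apply/idealP; split.
- by exists 0; rewrite mul0r.
- by move=> a b [r ->] [s ->]; exists (r + s); rewrite mulrDl.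
- by move=> r a [s ->]; exists (r * s); rewrite mulrA.
Qed.

Lemma gen_seqP (s : seq R) x :
  ideal_gen (fun y => y \in s) x <-> exists c : 'I_(size s) -> R, x = \sum_i c i * s`_i.
Proof.
split.
- move=> Hx; apply: (Hx (fun x => exists c : 'I_(size s) -> R, x = \sum_i c i * s`_i)).
  + apply/idealP; split.
    * by exists (fun _ => 0); rewrite big1 // => i _; rewrite mul0r.
    * move=> a b [c ->] [d ->]; exists (fun i => c i + d i).
      by rewrite -big_split /=; apply: eq_bigr => i _; rewrite mulrDl.
    * move=> r a [c ->]; exists (fun i => r * c i).
      by rewrite mulr_sumr; apply: eq_bigr => i _; rewrite mulrA.
  + move=> y ys; have ys' := ys; rewrite -index_mem in ys.
    exists (fun i => if i == Ordinal ys then 1 else 0).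
    rewrite (bigD1 (Ordinal ys)) //= eqxx mul1r nth_index //.
    rewrite big1 ?addr0 // => i /negbTE ->; by rewrite mul0r.
- case=> c ->; apply: (@id_sum (ideal_gen (fun y => y \in s))); first exact: gen_ideal.
  move=> i; apply: (idM (I := ideal_gen (fun y => y \in s))); first exact: gen_ideal.
  by apply: gen_sub; apply: mem_nth.
Qed.

Lemma mul_ideal I J : is_ideal I -> is_ideal J -> is_ideal (ideal_mul I J).
Proof.
move=> HI HJ; apply/idealP; split.
- exists 0%N, (fun _ => 0), (fun _ => 0); split; last by rewrite big_ord0.
  by move=> k; split; apply: id0.
- move=> x y [n [a [b [Hab ->]]]] [m [a' [b' [Hab' ->]]]].
  exists (n + m)%N, (fun i => match split i with inl j => a j | inr j => a' j end),
                    (fun i => match split i with inl j => b j | inr j => b' j end).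
  split; first by move=> k; case: (split k) => j.
  rewrite big_split_ord /=; congr (_ + _); apply: eq_bigr => i _.
    by rewrite (unsplitK (inl _ i)).
  by rewrite (unsplitK (inr _ i)).
- move=> r x [n [a [b [Hab ->]]]]; exists n, (fun i => r * a i), b; split.
  + by move=> k; case: (Hab k) => h1 h2; split => //; apply: idM.
  + by rewrite mulr_sumr; apply: eq_bigr => i _; rewrite mulrA.
Qed.

Lemma mul_in I J x y : I x -> J y -> ideal_mul I J (x * y).
Proof.
move=> Hx Hy; exists 1%N, (fun _ => x), (fun _ => y); split => //.
by rewrite big_ord1.
Qed.

Lemma mul_sub I J K : is_ideal K -> (forall x y, I x -> J y -> K (x * y)) ->
  Defs.subsetP (ideal_mul I J) K.
Proof.
move=> HK H z [n [a [b [Hab ->]]]]; apply: id_sum => // i.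
by case: (Hab i) => h1 h2; apply: H.
Qed.

End Gen.

Lemma id_sumP (R : comPzRingType) (I : R -> Prop) n (P : pred 'I_n) (F : 'I_n -> R) :
  is_ideal I -> (forall i, P i -> I (F i)) -> I (\sum_(i < n | P i) F i).
Proof.
move=> H HF; elim/big_ind: _ => //; first exact: id0.
by move=> a b; apply: idD.
Qed.


Lemma mccoy (S : comNzRingType) (T : S -> Prop) (G : {poly S}) j0 v :
  is_ideal T -> G`_j0 * v = 1 ->
  forall h : {poly S}, (forall k, T (G * h)`_k) -> forall k, T h`_k.
Proof.
move=> HT Hu h.
have [n Hn] : exists n, (size h <= n)%N by exists (size h).
elim: n h Hn => [|n IH] h Hn HGh.
  by move: Hn; rewrite size_poly_leq0 => /eqP -> k; rewrite coef0; apply: id0.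
have hz k : (n < k)%N -> h`_k = 0 by move=> Hk; apply: nth_default; apply: leq_trans Hk.
have claim : forall m j, (size G <= j + m)%N -> forall k, T (G`_j * h`_k).
  elim=> [|m IHm] j Hj.
    by rewrite addn0 in Hj; move=> k; rewrite nth_default // mul0r; apply: id0.
  have Hjo : (j < (n + j).+1)%N by rewrite ltnS leq_addl.
  have Hjn : T (G`_j * h`_n).
    have := HGh (n + j)%N; rewrite coefM (bigD1 (Ordinal Hjo)) //= addnK => H.
    have Hr : T (\sum_(i < (n + j).+1 | i != Ordinal Hjo) G`_i * h`_(n + j - i)).
      apply: id_sumP => // i Hi.
      case: (ltngtP i j) => Hij.
      - by rewrite hz ?mulr0; [apply: id0 | lia].
      - by apply: IHm; lia.
      - by move: Hi; rewrite -val_eqE /= Hij eqxx.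
    by have := idB HT H Hr; rewrite addrK.
  pose h' := \poly_(k < n) (G`_j * h`_k).
  have Eh' : h' = G`_j *: h - (G`_j * h`_n) *: 'X^n.
    apply/polyP => k; rewrite coef_poly coefB !coefZ coefXn.
    case: (ltngtP k n) => Hk.
    - by rewrite mulr0 subr0.
    - by rewrite (hz k Hk) /= !mulr0 subr0.

    - by rewrite Hk mulr1 subrr.
  have Hh' : forall k, T h'`_k.
    apply: IH; first exact: size_poly.
    move=> k; rewrite Eh' mulrBr -scalerAr -scalerAr coefB !coefZ.
    apply: idB => //; first by apply: idM.
    exact: idMr.
  move=> k; case: (ltnP k n) => Hk.
    by have := Hh' k; rewrite coef_poly Hk.
  case: (ltngtP k n) Hk => // Hk _; first by rewrite hz // mulr0; apply: id0.
  by rewrite Hk.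
move=> k; have := claim (size G) j0 (leq_addl _ _) k.
by move=> H; rewrite -[h`_k]mul1r -Hu (mulrC _ v) -mulrA; apply: idM.
Qed.


Section Val.
Variable A : idomainType.
Hypothesis hv : valuation_domain A.

Lemma vcmp (a b : A) : (exists c, b = c * a) \/ (exists c, a = c * b).
Proof.
case: (hv (pid_ideal a) (pid_ideal b)) => H.
- by right; apply: H; exists 1; rewrite mul1r.
- by left; apply: H; exists 1; rewrite mul1r.
Qed.

Lemma nu_add (a b : A) : a \isn't a GRing.unit -> b \isn't a GRing.unit ->
  a + b \isn't a GRing.unit.
Proof.
move=> Ha Hb; case: (vcmp a b) => [[c ->]|[c ->]].
- by rewrite -[X in X + _]mul1r -mulrDl unitrM negb_and Ha orbT.
- by rewrite -[X in _ + X]mul1r -mulrDl unitrM negb_and Hb orbT.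
Qed.

Lemma unit_add (a b : A) : a \is a GRing.unit -> b \isn't a GRing.unit ->
  a + b \is a GRing.unit.
Proof.
move=> Ha Hb; apply/negPn/negP => Hab.
have Hnb : - b \isn't a GRing.unit by rewrite unitrN.
by have := nu_add Hab Hnb; rewrite addrK Ha.
Qed.

Lemma nu_ideal : is_ideal (fun a : A => a \isn't a GRing.unit).
Proof.
apply/idealP; split.
- by rewrite unitr0.
- by move=> x y; apply: nu_add.
- by move=> r x Hx; rewrite unitrM negb_and Hx orbT.
Qed.

Lemma vmin n (c : 'I_n -> A) : (exists i, c i != 0) ->
  exists i0, c i0 != 0 /\ forall i, exists d, c i = d * c i0.
Proof.
case: n c => [|n] c; first by case=> [[]].
move=> [i Hi].
suff [i0 H] : exists i0, forall i, exists d, c i = d * c i0.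
  exists i0; split => //; apply/eqP => H0; move: Hi; case: (H i) => d ->.
  by rewrite H0 mulr0 eqxx.
elim: n c {i Hi} => [|n IH] c.
  by exists ord0 => i; exists 1; rewrite mul1r (ord1 i).
have [i1 H1] := IH (fun i => c (lift ord0 i)).
case: (vcmp (c ord0) (c (lift ord0 i1))) => [[d Hd]|[d Hd]].
- exists ord0 => i; case: (unliftP ord0 i) => [j ->|->]; last by exists 1; rewrite mul1r.
  by case: (H1 j) => d' ->; exists (d' * d); rewrite Hd mulrA.
- exists (lift ord0 i1) => i; case: (unliftP ord0 i) => [j ->|->]; first exact: H1.
  by exists d.
Qed.

End Val.

Section TE.
Variables (A : idomainType) (E : lmodType A).
Local Notation R := (triv_ext E).
Implicit Types x y : R.

Lemma fstM x y : (x * y).1 = x.1 * y.1. Proof. by []. Qed.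
Lemma sndM x y : (x * y).2 = x.1 *: y.2 + y.1 *: x.2. Proof. by []. Qed.
Lemma fstD x y : (x + y).1 = x.1 + y.1. Proof. by []. Qed.
Lemma sndD x y : (x + y).2 = x.2 + y.2. Proof. by []. Qed.
Lemma fstN x : (- x).1 = - x.1. Proof. by []. Qed.
Lemma sndN x : (- x).2 = - x.2. Proof. by []. Qed.
Lemma fst0 : (0 : R).1 = 0. Proof. by []. Qed.
Lemma snd0 : (0 : R).2 = 0. Proof. by []. Qed.
Lemma fst1 : (1 : R).1 = 1. Proof. by []. Qed.
Lemma snd1 : (1 : R).2 = 0. Proof. by []. Qed.
Lemma te_eq x y : x.1 = y.1 -> x.2 = y.2 -> x = y.
Proof. by case: x y => [? ?] [? ?] /= -> ->. Qed.
Lemma pair0 : ((0 : A), (0 : E)) = 0 :> R. Proof. by []. Qed.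
Lemma pair1 : ((1 : A), (0 : E)) = 1 :> R. Proof. by []. Qed.

Lemma fst_sum I (r : seq I) (P : pred I) (F : I -> R) :
  (\sum_(i <- r | P i) F i).1 = \sum_(i <- r | P i) (F i).1.
Proof. by elim/big_rec2: _ => // i a b _ <-. Qed.
Lemma snd_sum I (r : seq I) (P : pred I) (F : I -> R) :
  (\sum_(i <- r | P i) F i).2 = \sum_(i <- r | P i) (F i).2.
Proof. by elim/big_rec2: _ => // i a b _ <-. Qed.

Hypothesis hdiv : divisible E.

Lemma te_div x y : x.1 != 0 -> (exists c, y.1 = c * x.1) -> exists r, y = r * x.
Proof.
move=> Hx [c Hc]; have [z Hz] := hdiv (y.2 - c *: x.2) Hx.
exists (c, z); apply: te_eq => //=.
by rewrite -Hz addrC subrK.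
Qed.

Hypothesis hv : valuation_domain A.

Lemma pidE (e : E) : is_submodule (fun z : E => exists c, z = c *: e).
Proof.
split.
- by exists 0; rewrite scale0r.
- by move=> a b [c ->] [d ->]; exists (c + d); rewrite scalerDl.
- by move=> r a [c ->]; exists (r * c); rewrite scalerA.
Qed.

Lemma te_cmp (huni : uniserial E) x y : pid x y \/ pid y x.
Proof.
have Hc : forall x y : R, x.1 != 0 -> (exists c, y.1 = c * x.1) -> pid x y.
  by move=> a b Ha Hb; have [r ->] := te_div Ha Hb; exists r.
case: (eqVneq x.1 0) => Hx; case: (eqVneq y.1 0) => Hy.
- case: (huni _ _ (pidE x.2) (pidE y.2)) => H.
  + right; have [c Hc'] := H x.2 (ex_intro _ 1 (esym (scale1r _))).
    exists (c, 0); apply: te_eq => /=; first by rewrite Hx Hy mulr0.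
    by rewrite Hy Hc' scale0r addr0.
  + left; have [c Hc'] := H y.2 (ex_intro _ 1 (esym (scale1r _))).
    exists (c, 0); apply: te_eq => /=; first by rewrite Hx Hy mulr0.
    by rewrite Hx Hc' scale0r addr0.
- by right; apply: Hc => //; exists 0; rewrite Hx mul0r.
- by left; apply: Hc => //; exists 0; rewrite Hy mul0r.
- case: (vcmp hv x.1 y.1) => H; [left|right]; exact: Hc.
Qed.

Lemma part1 (huni : uniserial E) : chain_ring R.
Proof.
move=> S1 S2 H1 H2.
case: (classic (Defs.subsetP S1 S2)) => H; first by left.
right; have [x Hx] := not_all_ex_not _ _ H.
have Hx1 : S1 x by apply: NNPP => Hn; apply: Hx => /Hn.
have Hx2 : ~ S2 x by move=> H'; apply: Hx => _.
move=> y Hy; case: (te_cmp huni x y) => [[r ->]|[r Er]].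
- exact: (idM (I := S1)).
- by exfalso; apply: Hx2; rewrite Er; apply: (idM (I := S2)).
Qed.

End TE.


Section TE2.
Variables (A : idomainType) (E : lmodType A).
Local Notation R := (triv_ext E).
Hypothesis hdiv : divisible E.
Hypothesis hv : valuation_domain A.

Definition ze (e : E) : R := (0, e).
Lemma mul_ze (r : R) (e : E) : r * ze e = ze (r.1 *: e).
Proof. by apply: te_eq => /=; rewrite ?mulr0 // scale0r addr0. Qed.

Lemma notuni (hnu : ~ uniserial E) : exists x y : E,
  (~ exists c, x = c *: y) /\ (~ exists c, y = c *: x).
Proof.
apply: NNPP => Hno; apply: hnu => S1 S2 H1 H2.
have cmp : forall x y : E, (exists c, x = c *: y) \/ (exists c, y = c *: x).
  move=> x y; apply: NNPP => Hn; apply: Hno; exists x, y.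
  by split => H; apply: Hn; [left|right].
case: (classic (Defs.subsetP S1 S2)) => H; first by left.
right; have [x Hx] := not_all_ex_not _ _ H.
have Hx1 : S1 x by apply: NNPP => Hn; apply: Hx => /Hn.
have Hx2 : ~ S2 x by move=> H'; apply: Hx => _.
move=> y Hy; case: (cmp x y) => [[c Ec]|[c ->]].
- by exfalso; apply: Hx2; rewrite Ec; case: H2 => _ _; apply.
- by case: H1 => _ _; apply.
Qed.

Lemma indep2 (htf : torsionfree E) (x y : E) (nx : ~ exists c, x = c *: y)
  (ny : ~ exists c, y = c *: x) (r t : A) : r *: y = t *: x -> r = 0.
Proof.
move=> H; apply: NNPP => /eqP Hr.
case: (eqVneq t 0) => Ht.
  move: H; rewrite Ht scale0r => /htf [/eqP|]; first by rewrite (negbTE Hr).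
  by move=> Hy; apply: ny; exists 0; rewrite Hy scale0r.
case: (vcmp hv r t) => [[c Ec]|[c Ec]].
- apply: ny; exists c; move: H; rewrite Ec mulrC -scalerA => /eqP; rewrite -subr_eq0 -scalerBr.
  by move/eqP/htf => [/eqP|/eqP]; rewrite ?(negbTE Hr) // subr_eq0 => /eqP.
- apply: nx; exists c; move: H; rewrite Ec mulrC -scalerA => /eqP; rewrite eq_sym -subr_eq0 -scalerBr.
  by move/eqP/htf => [/eqP|/eqP]; rewrite ?(negbTE Ht) // subr_eq0 => /eqP.
Qed.

Lemma part2b (htf : torsionfree E) (hnu : ~ uniserial E) : ~ arithmetical R.
Proof.
move=> har; have [x [y [nx ny]]] := notuni hnu.
pose u := ze (x + y).
have := har (pid u) (pid (ze x)) (pid (ze y)) (pid_ideal _) (pid_ideal _) (pid_ideal _) u.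
case=> [H _]; have [|i [j [[Ii Ji] [Ik Jk] Eu]]] := H.
  split; first by exists 1; rewrite mul1r.
  exists (ze x), (ze y); split => //; try by exists 1; rewrite mul1r.
  by apply: te_eq => /=; rewrite ?addr0.
have Hi : i = 0.
  case: Ii => r Er; case: Ji => s Es.
  have : r.1 *: y = (s.1 - r.1) *: x.
    have E2 : (r * u).2 = (s * ze x).2 by rewrite -Er -Es.
    move: E2; rewrite /u !mul_ze /= scalerDr scalerBl => <-.
    by rewrite addrAC subrr add0r.
  move/(indep2 htf nx ny) => r0; by rewrite Er mul_ze r0 scale0r.
have Hj : j = 0.
  case: Ik => r Er; case: Jk => s Es.
  have : r.1 *: x = (s.1 - r.1) *: y.
    have E2 : (r * u).2 = (s * ze y).2 by rewrite -Er -Es.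
    move: E2; rewrite /u !mul_ze /= scalerDr scalerBl => <-.
    by rewrite addrK.
  move/(indep2 htf ny nx) => r0; by rewrite Er mul_ze r0 scale0r.
move: Eu; rewrite Hi Hj addr0 /u => -[] /eqP; rewrite addr_eq0 => /eqP Ey.
by apply: nx; exists (-1); rewrite Ey scaleN1r.
Qed.

End TE2.


Section TE3.
Variables (A : idomainType) (E : lmodType A).
Local Notation R := (triv_ext E).
Hypothesis hdiv : divisible E.
Hypothesis hv : valuation_domain A.

Definition sc (a : A) : R := (a, 0).
Lemma zeD a b : ze (a + b) = ze a + ze b :> R. Proof. by apply: te_eq => /=; rewrite ?mulr0 ?mul0r ?scale0r ?scaler0 ?addr0 ?oppr0 ?subr0. Qed.
Lemma zeN a : ze (- a) = - ze a :> R. Proof. by apply: te_eq => /=; rewrite ?mulr0 ?mul0r ?scale0r ?scaler0 ?addr0 ?oppr0 ?subr0. Qed.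
Lemma zeB a b : ze (a - b) = ze a - ze b :> R. Proof. by rewrite zeD zeN. Qed.
Lemma ze0 : ze 0 = 0 :> R. Proof. by []. Qed.
Lemma zeZ c a : ze (c *: a) = sc c * ze a :> R.
Proof. by apply: te_eq => /=; rewrite ?mulr0 ?mul0r ?scale0r ?scaler0 ?addr0 ?oppr0 ?subr0. Qed.
Lemma ze_inj a b : ze a = ze b :> R -> a = b.
Proof. by move=> H; have := congr1 snd H. Qed.
Lemma scD a b : sc (a + b) = sc a + sc b. Proof. by apply: te_eq => /=; rewrite ?mulr0 ?mul0r ?scale0r ?scaler0 ?addr0 ?oppr0 ?subr0. Qed.
Lemma scN a : sc (- a) = - sc a. Proof. by apply: te_eq => /=; rewrite ?mulr0 ?mul0r ?scale0r ?scaler0 ?addr0 ?oppr0 ?subr0. Qed.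
Lemma scB a b : sc (a - b) = sc a - sc b. Proof. by rewrite scD scN. Qed.
Lemma scM a b : sc (a * b) = sc a * sc b.
Proof. by apply: te_eq => /=; rewrite ?mulr0 ?mul0r ?scale0r ?scaler0 ?addr0 ?oppr0 ?subr0. Qed.
Lemma sc1 : sc 1 = 1. Proof. by []. Qed.
Definition zepush := (zeD, zeN, zeB, zeZ, scD, scN, scB, scM, sc1).

Lemma witness (htf : ~ torsionfree E) (hnu : ~ uniserial E) :
  exists (x y : E) (r0 : A), (~ exists c, x = c *: y) /\ r0 *: x = 0 /\ r0 *: y <> 0.
Proof.
have [a [e [Hae Hane]]] : exists (a : A) (e : E), a *: e = 0 /\ ~ (a = 0 \/ e = 0).
  apply: NNPP => Hn; apply: htf => a e Hae; apply: NNPP => H; apply: Hn.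
  by exists a, e.
have Ha : a <> 0 by move=> H; apply: Hane; left.
have He : e <> 0 by move=> H; apply: Hane; right.
have [e1 [e2 [n1 n2]]] := notuni hnu.
have e2n0 : e2 <> 0 by move=> H; apply: n2; exists 0; rewrite H scale0r.
have e1n0 : e1 <> 0 by move=> H; apply: n1; exists 0; rewrite H scale0r.
case: (classic (exists r, r *: e1 = 0 /\ r *: e2 <> 0)) => [[r [H1 H2]]|N1].
  by exists e1, e2, r.
case: (classic (exists r, r *: e2 = 0 /\ r *: e1 <> 0)) => [[r [H1 H2]]|N2].
  by exists e2, e1, r.
have ann : forall r, r *: e1 = 0 -> r *: e2 = 0.
  by move=> r H; apply: NNPP => H'; apply: N1; exists r.
case: (classic (exists t, t <> 0 /\ t *: e1 = 0)) => [[t [Ht Hte]]|N3].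
  have [y Ey] := hdiv e2 (introN eqP Ht).
  exists e1, y, t; split; last by split => //; rewrite -Ey.
  move=> [c Ec]; case: (vcmp hv c t) => [[d Ed]|[d Ed]].
  - by apply: n2; exists d; rewrite Ey Ed -scalerA -Ec.
  - by apply: n1; exists d; rewrite Ec Ed -scalerA -Ey.
exists e, e1, a; split; last split => //.
- move=> [c Ec]; have : (a * c) *: e1 = 0 by rewrite -scalerA -Ec.
  move=> H; have Hac : a * c = 0 by apply: NNPP => H'; apply: N3; exists (a * c).
  move/eqP: Hac; rewrite mulf_eq0 => /orP [/eqP //|/eqP c0].
  by apply: He; rewrite Ec c0 scale0r.
- by move=> H; apply: N3; exists a.
Qed.

Lemma part3b (htf : ~ torsionfree E) (hnu : ~ uniserial E) : ~ fqp_ring R.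
Proof.
move=> hfqp; have [x [y [r0 [nx [Hr0x Hr0y]]]]] := witness htf hnu.
pose s := [:: ze x; ze y].
pose I := ideal_gen (fun v => v \in s).
have HI : forall v, I v <-> exists p q : A, v = ze (p *: x + q *: y).
  move=> v; split.
  - case/gen_seqP => c ->; rewrite !big_ord_recl big_ord0 /= addr0 !mul_ze.
    by exists (c ord0).1, (c (lift ord0 ord0)).1; apply: te_eq => /=; rewrite ?addr0.
  - case=> p [q ->].
    have -> : ze (p *: x + q *: y) = sc p * ze x + sc q * ze y.
      by apply: te_eq => /=; rewrite ?mulr0 ?scale0r ?addr0 ?add0r.
    apply: (idD (I := I)); first exact: gen_ideal.
    + by apply: (idM (I := I)); [exact: gen_ideal | apply: gen_sub; rewrite inE eqxx].
    + by apply: (idM (I := I)); [exact: gen_ideal | apply: gen_sub; rewrite !inE eqxx orbT].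
pose J := fun j : A => exists q, j *: x = q *: y.
have Jnu : forall j, J j -> j \isn't a GRing.unit.
  move=> j [q Hq]; apply/negP => Hj; apply: nx; exists (j^-1 * q).
  by rewrite -scalerA -Hq scalerA mulVr ?scale1r.
pose X := fun v : R => exists j, J j /\ v = ze (j *: y).
have HX : is_ideal X.
  apply/idealP; split.
  - by exists 0; split; [exists 0; rewrite !scale0r | rewrite scale0r].
  - move=> v w [j [[q Hq] ->]] [j' [[q' Hq'] ->]]; exists (j + j'); split.
      by exists (q + q'); rewrite !scalerDl Hq Hq'.
    by apply: te_eq => /=; rewrite ?addr0 ?scalerDl.
  - move=> r v [j [[q Hq] ->]]; exists (r.1 * j); split.
      by exists (r.1 * q); rewrite -!scalerA Hq.
    by rewrite mul_ze scalerA.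
pose rep := fun v : R => epsilon (inhabits (0 : A, 0 : A))
   (fun pq : A * A => v = ze (pq.1 *: x + pq.2 *: y)).
have repP : forall v, I v -> v = ze ((rep v).1 *: x + (rep v).2 *: y).
  move=> v /HI Hv; apply: (epsilon_spec (inhabits (0 : A, 0 : A))
   (fun pq : A * A => v = ze (pq.1 *: x + pq.2 *: y))).
  by case: Hv => p [q Hpq]; exists (p, q).
pose h := fun v : R => ze ((rep v).1 *: y).
have Iid : is_ideal I by exact: gen_ideal.
have h1 : forall v, I v -> I (h v).
  by move=> v _; apply/HI; exists 0, (rep v).1; rewrite scale0r add0r.
have XI : Defs.subsetP X I.
  by move=> v [j [_ ->]]; apply/HI; exists 0, j; rewrite scale0r add0r.
have h2 : forall v w, I v -> I w -> X (h (v + w) - h v - h w).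
  move=> v w Iv Iw; have Ev := repP v Iv; have Ew := repP w Iw.
  have Evw := repP (v + w) (idD Iid Iv Iw).
  set P := (rep v).1 in Ev *; set Q := (rep v).2 in Ev.
  set P' := (rep w).1 in Ew *; set Q' := (rep w).2 in Ew.
  set P'' := (rep (v + w)).1 in Evw *; set Q'' := (rep (v + w)).2 in Evw.
  have Hs : sc P'' * ze x + sc Q'' * ze y = sc P * ze x + sc Q * ze y + (sc P' * ze x + sc Q' * ze y).
    by move: Evw; rewrite {1}Ev {1}Ew !zepush.
  exists (P'' - P - P'); split.
    exists (Q + Q' - Q''); apply: ze_inj; rewrite !zepush.
    have -> : (sc P'' - sc P - sc P') * ze x = (sc Q + sc Q' - sc Q'') * ze y +
       ((sc P'' * ze x + sc Q'' * ze y) - (sc P * ze x + sc Q * ze y + (sc P' * ze x + sc Q' * ze y))) by ring.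
    by rewrite Hs subrr addr0.
  by rewrite /h -/P -/P' -/P'' !zepush; ring.
have h3 : forall r v, I v -> X (h (r * v) - r * h v).
  move=> r v Iv; have Ev := repP v Iv; have Erv := repP (r * v) (idM r Iid Iv).
  set P := (rep v).1 in Ev *; set Q := (rep v).2 in Ev.
  set P' := (rep (r * v)).1 in Erv *; set Q' := (rep (r * v)).2 in Erv.
  have Hs : sc P' * ze x + sc Q' * ze y = sc r.1 * (sc P * ze x + sc Q * ze y).
    have E1 : ze (P' *: x + Q' *: y) = ze (r.1 *: (P *: x + Q *: y)) :> R.
      by rewrite -Erv {1}Ev mul_ze.
    by move: E1; rewrite !zepush.
  exists (P' - r.1 * P); split.
    exists (r.1 * Q - Q'); apply: ze_inj; rewrite !zepush.
    have -> : (sc P' - sc r.1 * sc P) * ze x = (sc r.1 * sc Q - sc Q') * ze y +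
       ((sc P' * ze x + sc Q' * ze y) - sc r.1 * (sc P * ze x + sc Q * ze y)) by ring.
    by rewrite Hs subrr addr0.
  by rewrite /h -/P -/P' mul_ze !zepush; ring.
have [f [_ fD fM fX]] := hfqp s X HX XI h h1 h2 h3.
have I0 : I 0 by apply: id0.
have f0 : f 0 = 0.
  have H := fD 0 0 I0 I0; rewrite addr0 in H.
  by apply: (addrI (f 0)); rewrite addr0 -H.
have Ix : I (ze x) by apply/HI; exists 1, 0; rewrite scale1r scale0r addr0.
have Ex := repP _ Ix; set p0 := (rep (ze x)).1 in Ex; set q0 := (rep (ze x)).2 in Ex.
have [j [Jj Ej]] := fX _ Ix.
have Efx : f (ze x) = ze ((j + p0) *: y) by rewrite scalerDl zeD -Ej /h -/p0 subrK.
have := fM (sc r0) _ Ix; rewrite -zeZ Hr0x ze0 f0 Efx -zeZ scalerA.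
move/esym/(ze_inj (b := 0)) => H0.
have J1 : J (1 - p0).
  exists q0; apply: ze_inj; move: Ex; rewrite !zepush => Ex.
  have -> : (1 - sc p0) * ze x = sc q0 * ze y + (ze x - (sc p0 * ze x + sc q0 * ze y)) by ring.
  by rewrite -Ex subrr addr0.
have Up0 : p0 \is a GRing.unit.
  have Hn : - (1 - p0) \isn't a GRing.unit by rewrite unitrN; apply: Jnu.
  by have := unit_add hv (unitr1 A) Hn; rewrite opprB addrCA subrr addr0.
have Ujp : j + p0 \is a GRing.unit by rewrite addrC; apply: unit_add => //; apply: Jnu.
apply: Hr0y; move: H0; rewrite mulrC -scalerA => /eqP.
by move=> /eqP H; rewrite -[r0 *: y]scale1r -(mulVr Ujp) -scalerA H scaler0.
Qed.

End TE3.


Section Content.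
Variable S : comNzRingType.
Implicit Types f g : {poly S}.

Lemma coef_content f i : content f f`_i.
Proof.
case: (ltnP i (size f)) => Hi; first by apply: gen_sub; apply: mem_nth.
by rewrite nth_default //; apply: id0; apply: gen_ideal.
Qed.

Lemma content_sub f (I : S -> Prop) : is_ideal I -> (forall i, I f`_i) ->
  Defs.subsetP (content f) I.
Proof.
move=> HI Hf; apply: gen_min => // x Hx; rewrite -(nth_index 0 Hx); exact: Hf.
Qed.

Lemma cmul_sub f g : Defs.subsetP (content (f * g)) (ideal_mul (content f) (content g)).
Proof.
apply: content_sub; first by apply: mul_ideal; apply: gen_ideal.
move=> k; rewrite coefM; exists k.+1, (fun i : 'I_k.+1 => f`_i), (fun i : 'I_k.+1 => g`_(k - i)).
by split => // i; split; apply: coef_content.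
Qed.

Lemma mul_sym (I J : S -> Prop) x : ideal_mul I J x -> ideal_mul J I x.
Proof.
case=> n [a [b [H ->]]]; exists n, b, a; split; first by move=> k; case: (H k).
by apply: eq_bigr => i _; rewrite mulrC.
Qed.
End Content.

Lemma unit_neq0 (T : unitRingType) (u : T) : u \is a GRing.unit -> u != 0.
Proof. by apply: contraTneq => ->; rewrite unitr0. Qed.

Section Gauss.
Variables (A : idomainType) (E : lmodType A).
Local Notation R := (triv_ext E).
Hypothesis hdiv : divisible E.
Hypothesis hv : valuation_domain A.
Implicit Types f g : {poly R}.

Definition Dv (a : A) : R -> Prop := fun x => exists d, x.1 = d * a.
Lemma Dv_ideal a : is_ideal (Dv a).
Proof.
apply/idealP; split.
- by exists 0; rewrite mul0r.
- by move=> x y [d Hd] [e He]; exists (d + e); rewrite fstD Hd He mulrDl.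
- by move=> r x [d Hd]; exists (r.1 * d); rewrite fstM Hd mulrA.
Qed.
Definition Z0 : R -> Prop := fun x => x.1 = 0.
Lemma Z0_ideal : is_ideal Z0.
Proof.
apply/idealP; split => //.
- by move=> x y; rewrite /Z0 fstD => -> ->; rewrite addr0.
- by move=> r x; rewrite /Z0 fstM => ->; rewrite mulr0.
Qed.

Definition fz f := forall i, (f`_i).1 = 0.

Lemma pmin f : ~ fz f -> exists k, (f`_k).1 != 0 /\ forall i, exists d, (f`_i).1 = d * (f`_k).1.
Proof.
move=> Hf.
have [i Hi] : exists i, (f`_i).1 != 0.
  apply: NNPP => H; apply: Hf => i; apply/eqP; apply/negPn/negP => H'; by apply: H; exists i.
have Hs : (i < size f)%N.
  by case: (ltnP i (size f)) => // Hs; move: Hi; rewrite nth_default //= eqxx.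
have [k [Hk Hmin]] := vmin hv (c := fun j : 'I_(size f) => (f`_j).1) (ex_intro _ (Ordinal Hs) Hi).
exists k; split => // j; case: (ltnP j (size f)) => Hj.
  exact: (Hmin (Ordinal Hj)).
by exists 0; rewrite mul0r nth_default.
Qed.

Lemma pquot f k : (forall i, exists d, (f`_i).1 = d * (f`_k).1) ->
  (f`_k).1 != 0 ->
  exists F : {poly A}, (forall i, (f`_i).1 = F`_i * (f`_k).1) /\ F`_k = 1.
Proof.
move=> Hmin Hk.
have hF : forall i, exists d, (f`_i).1 == d * (f`_k).1.
  by move=> i; case: (Hmin i) => d Hd; exists d; apply/eqP.
pose F := \poly_(i < size f) xchoose (hF i).
have HF : forall i, (f`_i).1 = F`_i * (f`_k).1.
  move=> i; rewrite coef_poly; case: ltnP => Hi; first by apply/eqP; apply: (xchooseP (hF i)).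
  by rewrite nth_default // mul0r.
exists F; split => //.
by apply: (mulIf Hk); rewrite mul1r -HF.
Qed.

Lemma fst_coefM f g m : ((f * g)`_m).1 = \sum_(i < m.+1) (f`_i).1 * (g`_(m - i)).1.
Proof. by rewrite coefM fst_sum. Qed.

Lemma gaussB f g : ~ fz f -> ~ fz g ->
  Defs.subsetP (ideal_mul (content f) (content g)) (content (f * g)).
Proof.
move=> Hf Hg.
have [k0 [Hk0 Hmf]] := pmin Hf; have [l0 [Hl0 Hmg]] := pmin Hg.
have [F [HF F1]] := pquot Hmf Hk0; have [G [HG G1]] := pquot Hmg Hl0.
set a := (f`_k0).1 in Hk0 HF; set b := (g`_l0).1 in Hl0 HG.
have [m Hm] : exists m, (F * G)`_m \is a GRing.unit.
  apply: NNPP => H.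
  have Hu : G`_l0 * 1 = 1 by rewrite mulr1.
  have Hh : forall k, ((G * F)`_k) \isn't a GRing.unit.
    by move=> k; rewrite mulrC; apply/negP => Hu'; apply: H; exists k.
  by have := @mccoy A _ G l0 1 (nu_ideal hv) Hu F Hh k0; rewrite F1 unitr1.
set w := (f * g)`_m.
have Hw : w.1 = (F * G)`_m * (a * b).
  rewrite /w fst_coefM coefM mulr_suml; apply: eq_bigr => i _.
  by rewrite HF HG mulrACA.
have Hw0 : w.1 != 0 by rewrite Hw !mulf_neq0 // unit_neq0.
apply: mul_sub; first by apply: gen_ideal.
move=> x y Hx Hy.
have [dx Hdx] : Dv a x by apply: (content_sub (Dv_ideal a)) Hx => i; exists F`_i.
have [dy Hdy] : Dv b y by apply: (content_sub (Dv_ideal b)) Hy => i; exists G`_i.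
have [r ->] : exists r, x * y = r * w.
  apply: te_div => //; exists (dx * dy * ((F * G)`_m)^-1).
  by rewrite Hw fstM Hdx Hdy -!mulrA; congr (_ * _); rewrite mulrCA mulKr // mulrCA.
by apply: (idM (I := content (f * g))); [apply: gen_ideal | apply: coef_content].
Qed.

Lemma gaussA f g : fz f -> fz g ->
  Defs.subsetP (ideal_mul (content f) (content g)) (content (f * g)).
Proof.
move=> Hf Hg; apply: mul_sub; first by apply: gen_ideal.
move=> x y Hx Hy.
have Zx : Z0 x by apply: (content_sub Z0_ideal) Hx.
have Zy : Z0 y by apply: (content_sub Z0_ideal) Hy.
have -> : x * y = 0.
  by apply: te_eq => /=; rewrite Zx Zy ?mulr0 ?scale0r ?addr0.
by apply: id0; apply: gen_ideal.
Qed.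

Lemma gaussC f g : fz f -> ~ fz g ->
  Defs.subsetP (ideal_mul (content f) (content g)) (content (f * g)).
Proof.
move=> Hf Hg.
have [l0 [Hl0 Hmg]] := pmin Hg; have [G [HG G1]] := pquot Hmg Hl0.
set b := (g`_l0).1 in Hl0 HG.
pose Gh := \poly_(j < size g) sc E (G`_j).
have HGh : forall j, Gh`_j = sc E (G`_j).
  move=> j; rewrite coef_poly; case: ltnP => // Hj.
  have := HG j; rewrite nth_default //= => /esym/eqP; rewrite mulf_eq0 (negbTE Hl0) orbF.
  by move/eqP ->.
have key : forall k, (f * g)`_k = sc E b * (Gh * f)`_k.
  move=> k; rewrite mulrC !coefM mulr_sumr; apply: eq_bigr => i _.
  rewrite HGh; apply: te_eq => /=.
    by rewrite Hf !mulr0.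
  rewrite Hf HG !scale0r !addr0 !mulr0 scale0r addr0.
  by rewrite scalerA mulrC.
pose T' := fun v : R => content (f * g) (sc E b * v).
have HT' : is_ideal T'.
  apply/idealP; split.
  - by rewrite /T' mulr0; apply: id0; apply: gen_ideal.
  - move=> x y Hx Hy; rewrite /T' mulrDr.
    by apply: (idD (I := content (f * g))) => //; apply: gen_ideal.
  - move=> r x Hx; rewrite /T' mulrCA.
    by apply: (idM (I := content (f * g))) => //; apply: gen_ideal.
have Hu : Gh`_l0 * 1 = 1 by rewrite mulr1 HGh G1.
have Hh : forall k, T' (Gh * f)`_k by move=> k; rewrite /T' -key; apply: coef_content.
have Tf := @mccoy R T' Gh l0 1 HT' Hu f Hh.
pose U := fun v : R => Z0 v /\ T' v.
have HU : is_ideal U.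
  apply/idealP; split.
  - by split; [apply: (id0 Z0_ideal) | apply: (id0 HT')].
  - by move=> x y [Hx1 Hx2] [Hy1 Hy2]; split; [apply: (idD Z0_ideal) | apply: (idD HT')].
  - by move=> r x [Hx1 Hx2]; split; [apply: (idM r Z0_ideal) | apply: (idM r HT')].
apply: mul_sub; first by apply: gen_ideal.
move=> x y Hx Hy.
have [Zx Tx] : U x by apply: (content_sub HU) Hx => i; split; [apply: Hf | apply: Tf].
have [dy Hdy] : Dv b y by apply: (content_sub (Dv_ideal b)) Hy => i; exists G`_i.
have -> : x * y = sc E dy * (sc E b * x).
  apply: te_eq => /=; first by rewrite Zx ?mulr0 ?mul0r.
  by rewrite Zx Hdy ?scale0r ?scaler0 ?addr0 ?mulr0 ?scale0r ?addr0 add0r scalerA.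
by apply: (idM _ (gen_ideal _)); apply: Tx.
Qed.

Lemma part3a : gaussian R.
Proof.
move=> f g x; split; first exact: cmul_sub.
case: (classic (fz f)) => Hf; case: (classic (fz g)) => Hg.
- exact: gaussA.
- exact: gaussC.
- by move/mul_sym; rewrite mulrC; apply: gaussC.
- exact: gaussB.
Qed.

End Gauss.


Section QP.
Variable R : comPzRingType.

Lemma qp_principal (I : R -> Prop) g : (forall x, I x <-> pid g x) ->
  quasi_projective_ideal I.
Proof.
move=> HI X HX XI h h1 h2 h3.
have Ig : I g by apply/HI; exists 1; rewrite mul1r.
have [c Hc] : pid g (h g) by apply/HI; apply: h1.
exists (fun v => c * v); split.
- by move=> v /HI [r ->]; apply/HI; exists (c * r); rewrite mulrA.
- by move=> v w _ _; rewrite mulrDr.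
- by move=> r v _; rewrite mulrCA.
- move=> v /HI [r ->]; have := h3 r g Ig; move/(idN HX).
  by rewrite opprB mulrCA -Hc.
Qed.

Lemma hsum (I X : R -> Prop) (h : R -> R) T (r : seq T) (c u : T -> R) :
  is_ideal I -> is_ideal X ->
  (forall v w, I v -> I w -> X (h (v + w) - h v - h w)) ->
  (forall (a v : R), I v -> X (h (a * v) - a * h v)) ->
  (forall i, I (u i)) ->
  X (\sum_(i <- r) c i * h (u i) - h (\sum_(i <- r) c i * u i)).
Proof.
move=> HI HX h2 h3 Hu; elim: r => [|i r IH].
  rewrite !big_nil sub0r; have := h2 0 0 (id0 HI) (id0 HI).
  by rewrite addr0 subrr sub0r.
rewrite !big_cons.
have IS : I (\sum_(j <- r) c j * u j).
  by elim/big_ind: _ => //; [apply: id0 | move=> a b; apply: idD | move=> j _; apply: idM].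
have Ib : I (c i * u i) by apply: idM.
set a := c i * h (u i); set S1 := \sum_(j <- r) _; set b := c i * u i.
set S2 := \sum_(j <- r) c j * u j in IS IH *.
have -> : a + S1 - h (b + S2) = - (h b - a) + (S1 - h S2) - (h (b + S2) - h b - h S2) by ring.
apply: idB => //; last by apply: h2.
apply: idD => //; apply: idN => //; exact: h3.
Qed.
End QP.

Section TF.
Variables (A : idomainType) (E : lmodType A).
Local Notation R := (triv_ext E).
Hypothesis hdiv : divisible E.
Hypothesis hv : valuation_domain A.
Hypothesis htf : torsionfree E.

Definition span n (e : 'I_n -> E) (m : E) := exists c : 'I_n -> A, m = \sum_i c i *: e i.
Definition Ie n (e : 'I_n -> E) : R -> Prop := fun x => x.1 = 0 /\ span e x.2.

Lemma Ie_ideal n (e : 'I_n -> E) : is_ideal (Ie e).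
Proof.
apply/idealP; split.
- split => //; exists (fun _ => 0); rewrite big1 // => i _; by rewrite scale0r.
- move=> x y [Hx1 [c Hc]] [Hy1 [d Hd]]; split; first by rewrite fstD Hx1 Hy1 addr0.
  exists (fun i => c i + d i); rewrite sndD Hc Hd -big_split /=.
  by apply: eq_bigr => i _; rewrite scalerDl.
- move=> r x [Hx1 [c Hc]]; split; first by rewrite fstM Hx1 mulr0.
  exists (fun i => r.1 * c i); rewrite sndM Hx1 scale0r addr0 Hc scaler_sumr.
  by apply: eq_bigr => i _; rewrite scalerA.
Qed.

Lemma Ie_e n (e : 'I_n -> E) i : Ie e (ze (e i)).
Proof.
split => //; exists (fun j => (j == i)%:R) => /=.
rewrite (bigD1 i) //= eqxx scale1r big1 ?addr0 // => j /negbTE ->.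
by rewrite scale0r.
Qed.

Lemma qp_indep n (e : 'I_n -> E) :
  (forall c : 'I_n -> A, \sum_i c i *: e i = 0 -> forall i, c i = 0) ->
  quasi_projective_ideal (Ie e).
Proof.
move=> Hind X HX XI h h1 h2 h3.
have HI := Ie_ideal e.
have uniq : forall c d : 'I_n -> A, \sum_i c i *: e i = \sum_i d i *: e i -> forall i, c i = d i.
  move=> c d Hcd i; apply/eqP; rewrite -subr_eq0; apply/eqP.
  apply: (Hind (fun i => c i - d i)).
  rewrite (eq_bigr (fun i => c i *: e i - d i *: e i)); last by move=> j _; rewrite scalerBl.
  by rewrite sumrB Hcd subrr.
pose cf := fun v : R => epsilon (inhabits (fun _ : 'I_n => (0 : A)))
   (fun c : 'I_n -> A => v.2 = \sum_i c i *: e i).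
have cfP : forall v, Ie e v -> v.2 = \sum_i cf v i *: e i.
  move=> v [_ Hv]; exact: (epsilon_spec (inhabits (fun _ : 'I_n => (0 : A)))
   (fun c : 'I_n -> A => v.2 = \sum_i c i *: e i) Hv).
have He : forall i, Ie e (h (ze (e i))) by move=> i; apply: h1; apply: Ie_e.
exists (fun v => \sum_i sc E (cf v i) * h (ze (e i))); split.
- move=> v _; apply: (@id_sum _ (Ie e)) => // i; exact: idM.
- move=> v w Iv Iw.
  have Hc : forall i, cf (v + w) i = cf v i + cf w i.
    apply: uniq; rewrite -cfP; last exact: idD.
    by rewrite sndD (cfP v Iv) (cfP w Iw) -big_split; apply: eq_bigr => i _; rewrite scalerDl.
  by rewrite -big_split; apply: eq_bigr => i _; rewrite Hc scD mulrDl.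
- move=> r v Iv.
  have Hc : forall i, cf (r * v) i = r.1 * cf v i.
    apply: uniq; rewrite -cfP; last exact: idM.
    have [Hv1 _] := Iv; rewrite sndM Hv1 scale0r addr0 (cfP v Iv).
    by rewrite scaler_sumr; apply: eq_bigr => i _; rewrite scalerA.
  rewrite mulr_sumr; apply: eq_bigr => i _; rewrite Hc.
  have [H1 _] := He i; set H := h (ze (e i)) in H1 *.
  apply: te_eq => /=; rewrite H1 ?mulr0 //.
  by rewrite !scale0r !addr0 ?mulr0 ?scale0r ?addr0 scalerA.
- move=> v Iv.
  have Ev : v = \sum_i sc E (cf v i) * ze (e i).
    apply: te_eq; first by rewrite fst_sum (proj1 Iv) big1 // => i _; rewrite /= mulr0.
    rewrite snd_sum (cfP v Iv); apply: eq_bigr => i _ /=.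
    by rewrite scaler0 addr0.
  have := @hsum R (Ie e) X h 'I_n (index_enum 'I_n) (fun i => sc E (cf v i))
    (fun i => ze (e i)) HI HX h2 h3 (Ie_e e).
  by rewrite -Ev.
Qed.

Lemma sumD1 n (i0 : 'I_n.+1) (F : 'I_n.+1 -> E) :
  \sum_i F i = F i0 + \sum_(j < n) F (lift i0 j).
Proof. by rewrite (bigD1_ord i0 (P := xpredT)). Qed.

Lemma span_red n (e : 'I_n.+1 -> E) (c : 'I_n.+1 -> A) i0 :
  \sum_i c i *: e i = 0 -> c i0 != 0 -> (forall i, exists d, c i = d * c i0) ->
  forall m, span e m <-> span (fun j => e (lift i0 j)) m.
Proof.
move=> Hc Hi0 Hmin.
have hd : forall i, exists d, c i == d * c i0 by move=> i; case: (Hmin i) => d ->; exists d.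
pose d := fun i => xchoose (hd i).
have Hd : forall i, c i = d i * c i0 by move=> i; apply/eqP; apply: (xchooseP (hd i)).
have Hsd : \sum_i d i *: e i = 0.
  have : c i0 *: \sum_i d i *: e i = 0.
    rewrite scaler_sumr -[RHS]Hc; apply: eq_bigr => i _; by rewrite scalerA mulrC -Hd.
  by case/htf => // /eqP; rewrite (negbTE Hi0).
have d1 : d i0 = 1 by apply: (mulIf Hi0); rewrite mul1r -Hd.
have Ei0 : e i0 = - \sum_(j < n) d (lift i0 j) *: e (lift i0 j).
  by have := Hsd; rewrite (sumD1 i0) d1 scale1r => /eqP; rewrite addr_eq0 => /eqP.
move=> m; split.
- case=> a ->; rewrite (sumD1 i0) Ei0 scalerN scaler_sumr -sumrN -big_split /=.
  exists (fun j => a (lift i0 j) - a i0 * d (lift i0 j)); apply: eq_bigr => j _.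
  by rewrite scalerA scalerBl addrC.
- case=> b ->; exists (fun i => if unlift i0 i is Some j then b j else 0).
  rewrite (sumD1 i0) unlift_none scale0r add0r; apply: eq_bigr => j _.
  by rewrite liftK.
Qed.

Lemma qp_free n (e : 'I_n -> E) : quasi_projective_ideal (Ie e).
Proof.
elim: n e => [|n IH] e.
  apply: qp_indep => c _ [] //.
case: (classic (forall c : 'I_n.+1 -> A, \sum_i c i *: e i = 0 -> forall i, c i = 0)) => Hind.
  exact: qp_indep.
have [c Hc] := not_all_ex_not _ _ Hind.
have Hsum : \sum_i c i *: e i = 0 by apply: NNPP => H; apply: Hc => /H.
have [i Hi] : exists i, c i != 0.
  apply: NNPP => H; apply: Hc => _ i; apply/eqP; apply/negPn/negP => Hi; apply: H; by exists i.
have [i0 [Hi0 Hmin]] := vmin hv (ex_intro _ i Hi).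
have -> : Ie e = Ie (fun j => e (lift i0 j)).
  apply: functional_extensionality => x; apply: propositional_extensionality.
  rewrite /Ie; split => -[H1 H2]; split => //; first by apply/(span_red Hsum Hi0 Hmin).
  by apply/(span_red Hsum Hi0 Hmin).
exact: IH.
Qed.

Lemma part2a : fqp_ring R.
Proof.
move=> s.
case: (classic (exists i : 'I_(size s), (s`_i).1 != 0)) => Hs.
  have [i0 [Hi0 Hmin]] := vmin hv Hs; set g := s`_i0 in Hi0 Hmin.
  apply: (qp_principal (g := g)) => x; split.
  - apply: gen_min; first exact: pid_ideal.
    move=> y Hy; have Ey := nth_index 0 Hy; rewrite -index_mem in Hy.
    have [d Hd] := Hmin (Ordinal Hy).
    have Hd' : y.1 = d * g.1 by rewrite -Ey.
    by have [r Hr] := te_div hdiv Hi0 (ex_intro _ d Hd'); exists r.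
  - case=> r ->; apply: (idM _ (gen_ideal _)); apply: gen_sub; exact: mem_nth.
have Hz : forall i : 'I_(size s), (s`_i).1 = 0.
  by move=> i; apply/eqP; apply/negPn/negP => H; apply: Hs; exists i.
have -> : ideal_gen (fun y => y \in s) = Ie (fun i : 'I_(size s) => (s`_i).2).
  apply: functional_extensionality => x; apply: propositional_extensionality.
  rewrite gen_seqP; split.
  - case=> c ->; split.
      by rewrite fst_sum big1 // => i _; rewrite fstM Hz mulr0.
    exists (fun i => (c i).1); rewrite snd_sum; apply: eq_bigr => i _.
    by rewrite sndM Hz scale0r addr0.
  - case=> [H1 [d Hd]]; exists (fun i => sc E (d i)); apply: te_eq.
      by rewrite fst_sum H1 big1 // => i _; rewrite fstM Hz mulr0.
    rewrite Hd snd_sum; apply: eq_bigr => i _.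
    by rewrite sndM Hz scale0r addr0.
exact: qp_free.
Qed.

End TF.


Theorem corollary4p3 (A : idomainType) (E : lmodType A) :
  valuation_domain A -> ~ is_field_ring A ->
  divisible E -> (exists e : E, e <> 0) ->
  [/\ (uniserial E -> chain_ring (triv_ext E)),
      (torsionfree E -> ~ uniserial E ->
         fqp_ring (triv_ext E) /\ ~ arithmetical (triv_ext E)) &
      (~ torsionfree E -> ~ uniserial E ->
         gaussian (triv_ext E) /\ ~ fqp_ring (triv_ext E))].
Proof.
move=> hv _ hdiv _; split.
- exact: (part1 hdiv hv).
- move=> htf hnu; split; first exact: (part2a hdiv hv htf).
  exact: (part2b hv htf hnu).
- move=> htf hnu; split; first exact: (part3a hdiv hv).
  exact: (part3b hdiv hv htf hnu).
Qed.
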